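(* Let $C:\mathcal A\to\{0,1\}^+$ be the shortlex source code. For any $u\in\mathcal A$ with $K(u)=k$, we have $|C(u)|\in\{k-1,k\}$. Moreover, for every $k\ge2$, among the $S_k$ admissible strings of cost $k$, exactly $S_k/2$ receive a codeword of length $k-1$ and exactly $S_k/2$ receive a codeword of length $k$.
   Context: Let $\mathcal X=\{A,B,C,D\}$ and let $(X_i)_{i\ge1}$ be the first-order Markov chain on $\mathcal X$ with $\mathbb P(X_1=x)=1/4$ for all $x\in\mathcal X$ and transition probabilities: from $A$ go to $A$ or $C$ with probability $1/2$ each; from $B$ go to $B$ or $D$ with probability $1/2$ each; from $C$ and from $D$ go to each of $A,B,C,D$ with probability $1/4$. A nonempty finite string $x_1^n\in\mathcal X^n$ is admissible if every transition $x_i\to x_{i+1}$ ($1\le i\le n-1$) has positive probability; $\mathcal A\subset\mathcal X^+$ denotes the set of admissible nonempty strings. For $u=x_1^m\in\mathcal A$, the information cost is $K(u):=-\log_2\mathbb P(X_1^m=u)$, and $S_k:=\#\{u\in\mathcal A:K(u)=k\}$. Shortlex source code: order nonempty binary strings by length, then lexicographically, as $b_1,b_2,\dots$; order $\mathcal A$ as $u_1,u_2,\dots$ by increasing $K$, then increasing length, then lexicographically with $A<B<C<D$; set $C(u_j):=b_j$ (the code $C$ is not to be confused with the source symbol $C$). $|w|$ denotes the length of a binary string $w$. *)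

(* Defs.v *)
From mathcomp Require Import all_boot all_order all_algebra.
Set Implicit Arguments. Unset Strict Implicit. Unset Printing Implicit Defensive.
Import Order.TTheory GRing.Theory Num.Theory.

(* Source alphabet {A,B,C,D} encoded as 'I_4 : A = 0, B = 1, C = 2, D = 3.
   The ordinal order is the lexicographic letter order A < B < C < D. *)
Definition sym := 'I_4.
Definition sA : sym := @Ordinal 4 0 erefl.
Definition sB : sym := @Ordinal 4 1 erefl.
Definition sC : sym := @Ordinal 4 2 erefl.
Definition sD : sym := @Ordinal 4 3 erefl.

Local Open Scope ring_scope.

Definition trans (x y : sym) : rat :=
  if x == sA then (if (y == sA) || (y == sC) then 2^-1 else 0)
  else if x == sB then (if (y == sB) || (y == sD) then 2^-1 else 0)
  else 4^-1.

Definition prob (u : seq sym) : rat :=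
  match u with
  | [::] => 1
  | x :: s => 4^-1 * \prod_(q <- pairmap trans x s) q
  end.

Definition admissible (u : seq sym) : bool :=
  match u with
  | [::] => false
  | x :: s => path (fun a b => 0 < trans a b) x s
  end.

Local Close Scope ring_scope.

(* Bit cost -log2 of a positive transition out of state x. *)
Definition bits (x : sym) : nat := if (x == sA) || (x == sB) then 1 else 2.

(* Information cost K(u) = -log2 P(X_1^m = u), computed as a sum of bits;
   the lemma K_spec below certifies it equals -log2 (prob u). *)
Definition K (u : seq sym) : nat :=
  match u with
  | [::] => 0
  | x :: s => 2 + sumn (map bits (belast x s))
  end.

Lemma trans_bits (x y : sym) : (0 < trans x y)%R -> trans x y = (2^-1 ^+ bits x)%R.
Proof.
case: x => [[|[|[|[|n]]]] Hx] //; case: y => [[|[|[|[|m]]]] Hy] //;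
  rewrite /trans /bits /sA /sB /sC /sD //=.
all: try by rewrite ltxx.
all: by move=> _; rewrite expr2 -invfM.
Qed.

Lemma K_spec (u : seq sym) : admissible u -> prob u = (2^-1 ^+ K u)%R.
Proof.
case: u => [|x s] //= Hp.
have H : forall x s, path (fun a b => (0 < trans a b)%R) x s ->
   (\prod_(q <- pairmap trans x s) q)%R = (2^-1 ^+ sumn (map bits (belast x s)))%R.
  clear Hp x s => x s; elim: s x => [|y s IH] x /=; first by rewrite big_nil expr0.
  move=> /andP[Hxy Hs]; rewrite big_cons IH // trans_bits // exprD //.
by rewrite H // exprD expr2 -invfM.
Qed.

Fixpoint all_strings (n : nat) : seq (seq sym) :=
  match n with
  | 0 => [:: [::]]
  | n.+1 => [seq x :: s | x <- enum 'I_4, s <- all_strings n]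
  end.

(* Admissible strings of cost k, ordered by length then lexicographically.
   Lengths up to k suffice since every symbol costs at least one bit. *)
Definition cost_strings (k : nat) : seq (seq sym) :=
  [seq u <- flatten [seq all_strings m | m <- iota 1 k] | admissible u && (K u == k)].

Definition S (k : nat) : nat := size (cost_strings k).

(* 1-based position j of u in the ordering u_1, u_2, ... of the admissible
   strings (by K, then length, then lex). *)
Definition src_index (u : seq sym) : nat :=
  (\sum_(k < K u) S k) + index u (cost_strings (K u)) + 1.

(* Binary strings of length exactly n, lexicographic (false = 0 < true = 1). *)
Fixpoint bin_strings (n : nat) : seq (seq bool) :=
  match n with
  | 0 => [:: [::]]
  | n.+1 => [seq b :: s | b <- [:: false; true], s <- bin_strings n]
  end.

(* b_j : j-th nonempty binary string in shortlex order (j >= 1). *)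
Definition bstr (j : nat) : seq bool :=
  nth [::] (flatten [seq bin_strings L | L <- iota 1 j]) j.-1.

Definition code (u : seq sym) : seq bool := bstr (src_index u).

(* Main.v *)
Require Import Defs.
From mathcomp Require Import all_boot all_order all_algebra.
From mathcomp Require Import zify.
Import Order.TTheory GRing.Theory Num.Theory.
Lemma enum4 : enum 'I_4 = [:: sA; sB; sC; sD].
Proof. by apply: (inj_map val_inj); rewrite val_enum_ord. Qed.
Lemma all_strings_S m : all_strings m.+1 =
  [seq sA :: s | s <- all_strings m] ++ [seq sB :: s | s <- all_strings m] ++
  [seq sC :: s | s <- all_strings m] ++ [seq sD :: s | s <- all_strings m] ++ [::].
Proof. by rewrite /= enum4. Qed.
Definition adj (x y : sym) : bool :=
  if x == sA then (y == sA) || (y == sC)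
  else if x == sB then (y == sB) || (y == sD) else true.
Lemma transP x y : (0 < trans x y)%R = adj x y.
Proof.
rewrite /trans /adj.
case: ifP => _; first case: ifP => _; rewrite ?ltxx ?invr_gt0 ?ltr0n //.
case: ifP => _; first case: ifP => _; rewrite ?ltxx ?invr_gt0 ?ltr0n //.
Qed.
Lemma Kstep x y t k : (K (x :: y :: t) == k + bits x) = (K (y :: t) == k).
Proof. rewrite /K /= [k + _]addnC addnCA eqn_add2l //. Qed.
Definition P k (u : seq sym) := admissible u && (K u == k).
Definition G (x : sym) m k := count (P k \o cons x) (all_strings m).
Lemma count_S k m : count (P k) (all_strings m.+1) =
  G sA m k + G sB m k + G sC m k + G sD m k.
Proof. by rewrite all_strings_S !count_cat !count_map /G addn0 !addnA. Qed.
Lemma G0 x k : G x 0 k = (k == 2).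
Proof. by rewrite /G /= /P /= addn0 eq_sym. Qed.
Lemma Gstep x y m k : count (P (k + bits x) \o cons x \o cons y) (all_strings m)
   = if adj x y then G y m k else 0.
Proof.
rewrite /G; case: ifP => H.
  by apply: eq_count => t; rewrite /P /= Kstep transP H.
by rewrite -(count_pred0 (all_strings m)); apply: eq_count => t; rewrite /P /= Kstep transP H.
Qed.
Lemma G_rec x m k : G x m.+1 (k + bits x) =
  (if adj x sA then G sA m k else 0) + (if adj x sB then G sB m k else 0) +
  (if adj x sC then G sC m k else 0) + (if adj x sD then G sD m k else 0).
Proof.
by rewrite {1}/G all_strings_S !count_cat !count_map addn0 !addnA -!(Gstep x).
Qed.
Lemma GA m k : G sA m.+1 k.+1 = G sA m k + G sC m k.
Proof. have := G_rec sA m k; rewrite /= addn1 => ->; by rewrite !addn0. Qed.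
Lemma GB m k : G sB m.+1 k.+1 = G sB m k + G sD m k.
Proof. have := G_rec sB m k; rewrite /= addn1 => ->; by rewrite !addn0. Qed.
Lemma GC m k : G sC m.+1 k.+2 = G sA m k + G sB m k + G sC m k + G sD m k.
Proof. have := G_rec sC m k; rewrite /= addn2 => ->; by rewrite /=. Qed.
Lemma GD m k : G sD m.+1 k.+2 = G sA m k + G sB m k + G sC m k + G sD m k.
Proof. have := G_rec sD m k; rewrite /= addn2 => ->; by rewrite /=. Qed.
Lemma all_strings_size m s : s \in all_strings m -> size s = m.
Proof.
elim: m s => [|m IH] s; first by rewrite inE => /eqP->.
rewrite all_strings_S !mem_cat in_nil orbF => /or4P[] /mapP[t /IH <- ->] //.
Qed.
Lemma sumn_bits l : size l <= sumn (map bits l).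
Proof.
elim: l => //= x l IH; rewrite -add1n leq_add //.
by rewrite /bits; case: ifP.
Qed.
Lemma K_ge x s : size s + 2 <= K (x :: s).
Proof. by rewrite /K addnC leq_add2l -(size_belast x s) sumn_bits. Qed.
Lemma G_van x m k : k < m + 2 -> G x m k = 0.
Proof.
move=> Hk; rewrite /G -(count_pred0 (all_strings m)).
apply: eq_in_count => s /all_strings_size Hs /=; rewrite /P.
have := K_ge x s; rewrite Hs => H2.
apply/negbTE/negP => /andP[_ /eqP E]; rewrite E in H2.
by move: (leq_ltn_trans H2 Hk); rewrite ltnn.
Qed.
Definition F m k := G sA m k + G sB m k + G sC m k + G sD m k.
Lemma F_van m k : k < m + 2 -> F m k = 0.
Proof. by move=> H; rewrite /F !G_van. Qed.
Lemma S_F k : S k = \sum_(0 <= m < k) F m k.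
Proof.
rewrite /S /cost_strings size_filter.
rewrite (_ : (fun u => _) = P k) // count_flatten -map_comp sumnE big_map.
rewrite -(addn0 1) iotaDl big_map /index_iota subn0.
by apply: eq_bigr => m _; rewrite /= count_S.
Qed.
Lemma F_rec m k : F m.+1 k.+3 = F m k.+2 + 2 * F m k.+1.
Proof.
rewrite /F GA GB GC GD; move: (G sA m k.+2) (G sB m k.+2) (G sC m k.+2) (G sD m k.+2) (G sA m k.+1) (G sB m k.+1) (G sC m k.+1) (G sD m k.+1) => *; lia.
Qed.
Lemma S_ext k N : k <= N -> \sum_(0 <= m < N) F m k = S k.
Proof.
move=> H; rewrite S_F (@big_cat_nat _ _ _ k 0 N _ _ (leq0n k) H) /=.
rewrite [X in _ + X]big1_seq ?addn0 // => m /andP[_]; rewrite mem_index_iota => /andP[Hm _].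
by apply: F_van; lia.
Qed.
Lemma S_rec k : S k.+3 = S k.+2 + 2 * S k.+1.
Proof.
rewrite S_F big_nat_recl // (_ : F 0 k.+3 = 0) ?add0n; last by rewrite /F !G0.
under eq_bigr => m _ do rewrite F_rec.
rewrite big_split /= -big_distrr /= !S_ext //.
Qed.
Lemma S0 : S 0 = 0. Proof. by rewrite S_F big_geq. Qed.
Lemma S1 : S 1 = 0. Proof. by rewrite S_F big_nat1 F_van. Qed.
Lemma S2 : S 2 = 4. Proof. by rewrite S_F big_nat_recr //= big_nat1 (@F_van 1 2) // /F !G0. Qed.
Lemma bin_S n : bin_strings n.+1 =
  [seq false :: s | s <- bin_strings n] ++ [seq true :: s | s <- bin_strings n] ++ [::].
Proof. by []. Qed.
Lemma size_bin n : size (bin_strings n) = 2 ^ n.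
Proof. elim: n => // n IH; rewrite bin_S !size_cat !size_map IH expnS /=; lia. Qed.
Lemma bin_size n s : s \in bin_strings n -> size s = n.
Proof.
elim: n s => [|n IH] s; first by rewrite inE => /eqP->.
rewrite bin_S !mem_cat in_nil orbF => /orP[] /mapP[t /IH <- ->] //.
Qed.
Definition flat n := flatten [seq bin_strings L | L <- iota 1 n].
Lemma flat_S n : flat n.+1 = flat n ++ bin_strings n.+1 ++ [::].
Proof. by rewrite /flat -[n.+1]addn1 iotaD map_cat flatten_cat add1n addn1. Qed.
Lemma size_flat n : size (flat n) + 2 = 2 ^ n.+1.
Proof.
elim: n => // n IH; rewrite flat_S cats0 size_cat size_bin.
rewrite [2 ^ n.+2]expnS; lia.
Qed.
Lemma flat_nth n L i : 1 <= L <= n -> i < 2 ^ L ->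
  size (nth [::] (flat n) (2 ^ L - 2 + i)) = L.
Proof.
elim: n => [|n IH] HL Hi; first lia.
have e2 : 2 <= 2 ^ L by rewrite -{1}(expn1 2) leq_pexp2l //; lia.
rewrite flat_S nth_cat.
have := size_flat n.
case: (ltnP L n.+1) => HLn.
  have eL : 2 ^ L.+1 <= 2 ^ n.+1 by rewrite leq_pexp2l.
  have eS : 2 ^ L.+1 = 2 * 2 ^ L by rewrite expnS.
  move=> Hs; have -> : 2 ^ L - 2 + i < size (flat n) by lia.
  apply: IH => //; lia.
have eL : L = n.+1 by lia.
subst L => Hs; have -> : (2 ^ n.+1 - 2 + i < size (flat n)) = false by lia.
rewrite nth_cat size_bin (_ : 2 ^ n.+1 - 2 + i - size (flat n) = i); last by lia.
by rewrite Hi; apply: bin_size; rewrite mem_nth // size_bin.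
Qed.
Lemma bstr_size L i : 1 <= L -> i < 2 ^ L -> size (bstr (2 ^ L - 1 + i)) = L.
Proof.
move=> HL Hi; rewrite /bstr.
have e1 : L < 2 ^ L by apply: ltn_expl.
have -> : (2 ^ L - 1 + i).-1 = 2 ^ L - 2 + i by lia.
by apply: flat_nth => //; lia.
Qed.
Definition T k := \sum_(j < k) S j.
Lemma Sadj k : S k.+1 + S k.+2 = 2 ^ k.+2.
Proof.
elim: k => [|k IH]; first by rewrite S1 S2.
rewrite S_rec [2 ^ k.+3]expnS; lia.
Qed.
Lemma Tsum k : 2 * T k.+1 + S k.+1 + 4 = 2 ^ k.+2.
Proof.
elim: k => [|k IH]; first by rewrite /T big_ord1 S0 S1.
have := Sadj k; rewrite /T in IH *; rewrite big_ord_recr /=.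
rewrite [2 ^ k.+3]expnS; move: IH; rewrite (_ : \sum_(j < k.+1) S j = \sum_(i < k.+1) S i) //; move: (\sum_(i < k.+1) S i) => x; lia.
Qed.
Lemma Seven n : S n.+2 = 2 * (T n.+1 + 2).
Proof. have := Tsum n; have := Sadj n; lia. Qed.

Lemma mem_all_strings s : s \in all_strings (size s).
Proof.
elim: s => [|x s IH] /=; first by rewrite inE.
have : x \in enum 'I_4 by rewrite mem_enum.
rewrite -/(all_strings (size s).+1) all_strings_S enum4 !inE !mem_cat.
by move=> /or4P[]/eqP->; rewrite map_f ?orbT.
Qed.
Lemma uniq_all_strings m : uniq (all_strings m).
Proof.
elim: m => // m IH /=; apply: allpairs_uniq => //; first exact: enum_uniq.
by move=> [a s] [b t] _ _ /= [-> ->].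
Qed.
Lemma uniq_flat l : uniq l -> uniq (flatten (map all_strings l)).
Proof.
elim: l => //= a l IH /andP[Ha Hl]; rewrite cat_uniq uniq_all_strings IH // andbT.
apply/hasPn => s /flatten_mapP[b Hb Ht]; apply/negP => Hs.
move: Ha; by rewrite -(all_strings_size _ _ Hs) (all_strings_size _ _ Ht) Hb.
Qed.
Lemma uniq_cost k : uniq (cost_strings k).
Proof. by apply: filter_uniq; apply: uniq_flat; apply: iota_uniq. Qed.
Lemma cost_K k u : u \in cost_strings k -> K u = k.
Proof. by rewrite mem_filter => /andP[/andP[_ /eqP]]. Qed.
Lemma cost_mem u : admissible u -> u \in cost_strings (K u).
Proof.
move=> Ha; rewrite mem_filter Ha eqxx /=.
case: u Ha => // x s Ha.
apply/flatten_mapP; exists (size (x :: s)); last exact: mem_all_strings.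
rewrite mem_iota; have := K_ge x s; rewrite /=; lia.
Qed.
Lemma code_len n u : u \in cost_strings n.+2 ->
  size (code u) = if index u (cost_strings n.+2) < T n.+1 + 2 then n.+1 else n.+2.
Proof.
move=> Hu; have HK := cost_K _ _ Hu.
have Hi : index u (cost_strings n.+2) < S n.+2 by rewrite index_mem.
rewrite /code /src_index HK -/(T n.+2).
move: Hi; set i := index u _ => Hi.
have H1 := Tsum n.+1; have H2 := Sadj n; have H3 := Seven n.
have HT : T n.+2 = T n.+1 + S n.+1 by rewrite /T big_ord_recr.
have e1 : 2 ^ n.+3 = 2 * 2 ^ n.+2 by rewrite expnS.
have e2 : 2 ^ n.+2 = 2 * 2 ^ n.+1 by rewrite expnS.
case: ifP => Hh.
  have -> : T n.+2 + i + 1 = 2 ^ n.+1 - 1 + (T n.+2 + i + 2 - 2 ^ n.+1) by lia.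
  by apply: bstr_size => //; lia.
have -> : T n.+2 + i + 1 = 2 ^ n.+2 - 1 + (T n.+2 + i + 2 - 2 ^ n.+2) by lia.
by apply: bstr_size => //; lia.
Qed.
Lemma count_iota_lt h : count (fun i => i < h) (iota 0 (h + h)) = h.
Proof.
rewrite iotaD count_cat add0n.
rewrite (eq_in_count (a2 := predT)); last by move=> i; rewrite mem_iota => /andP[_ ->].
rewrite count_predT size_iota.
rewrite (eq_in_count (a2 := pred0)); first by rewrite count_pred0 addn0.
by move=> i; rewrite mem_iota => /andP[H _] /=; rewrite ltnNge H.
Qed.
Lemma count_iota_ge h : count (fun i => ~~ (i < h)) (iota 0 (h + h)) = h.
Proof.
rewrite iotaD count_cat add0n.
rewrite (eq_in_count (a1 := fun i => ~~ (i < h)) (a2 := pred0) (s := iota 0 h)); last first.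
  by move=> i; rewrite mem_iota => /andP[_ ->].
rewrite count_pred0 add0n (eq_in_count (a2 := predT)); first by rewrite count_predT size_iota.
by move=> i; rewrite mem_iota => /andP[H _] /=; rewrite -leqNgt H.
Qed.
Lemma count_code n (b : bool) :
  count (fun u => size (code u) == (if b then n.+1 else n.+2)) (cost_strings n.+2)
  = T n.+1 + 2.
Proof.
set s := cost_strings n.+2.
have Hs : size s = (T n.+1 + 2) + (T n.+1 + 2) by rewrite /s -/(S n.+2) Seven; lia.
rewrite -{1}(mkseq_nth [::] s) /mkseq count_map Hs.
move: Hs; rewrite /s => Hs.
case: b; [rewrite -[RHS](count_iota_lt (T n.+1 + 2)) | rewrite -[RHS](count_iota_ge (T n.+1 + 2))];
  apply: eq_in_count => i; rewrite mem_iota -Hs => /andP[_ Hi] /=;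
  rewrite (@code_len n) ?mem_nth // index_uniq ?uniq_cost //; case: ifP => H /=; rewrite ?H ?eqxx //=; apply/eqP; lia.
Qed.
Theorem mainTheorem5 :
  (forall u : seq sym, admissible u ->
     size (code u) = (K u).-1 \/ size (code u) = K u) /\
  (forall k : nat, 2 <= k ->
     2 * count (fun u => size (code u) == k.-1) (cost_strings k) = S k /\
     2 * count (fun u => size (code u) == k) (cost_strings k) = S k).
Proof.
split.
  move=> u Ha; have Hu := cost_mem u Ha.
  have HK : 2 <= K u by case: u Ha Hu => // x s _ _; have := K_ge x s; lia.
  move: Hu; have [n ->] : exists n, K u = n.+2 by exists (K u).-2; lia.
  move=> Hu; rewrite (code_len n u Hu); case: ifP => _; [left|right] => //.
move=> [|[|n]] // _; split.
  by have := count_code n true; rewrite Seven /= => ->.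
by have := count_code n false; rewrite Seven /= => ->.
Qed.
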